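(* There is a function $F:\mathbb{N}\to\mathbb{R}_{\ge0}$ such that the following holds. Let $G=(V,E,c_V^G,c_E^G)$ and $H=(V,E,c_V^H,c_E^H)$ be two capacitated graphs on the same $n$-vertex graph $(V,E)$ such that every vertex capacity and every edge capacity of $G$ differs from the corresponding capacity of $H$ by at most $\xi$. Let $\mu_G,\mu_H$ be the fractional matchings returned by Rising-Tide on $G$ and $H$. Then for every edge $e\in E$, $|\mu_G(e)-\mu_H(e)|\le F(n)\xi$.
   Context: Capacitated graphs have nonnegative vertex capacities $c_V$ and edge capacities $c_E$; edges may include self-loops, and in $\sum_j\mu(i,j)$ a self-loop at $i$ counts once. A feasible fractional matching $\mu:E\to\mathbb{R}_{\ge0}$ satisfies $\mu(e)\le c_E(e)$ and $\sum_j\mu(i,j)\le c_V(i)$. Vertex $i$ is saturated if $\sum_j\mu(i,j)=c_V(i)$; edge $e$ is saturated if $\mu(e)=c_E(e)$. Rising-Tide: set $E'=\{e\in E:c_E(e)>0\}$ and $\mu\equiv0$; while $E'\ne\emptyset$: choose the maximum $\delta\ge0$ such that $\mu+\delta\mathbf{1}_{E'}$ is feasible, set $\mu\gets\mu+\delta\mathbf{1}_{E'}$, and remove from $E'$ every edge $(i,j)$ such that $i$, $j$, or $(i,j)$ is saturated; return $\mu$. *)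

(* Defs.v *)
From HB Require Import structures.
From mathcomp Require Import all_boot all_order all_algebra.
From mathcomp Require Import reals.
From Stdlib Require Import Relations.
Set Implicit Arguments. Unset Strict Implicit. Unset Printing Implicit Defensive.
Import Order.TTheory GRing.Theory Num.Theory.
Local Open Scope ring_scope.

(* A graph on vertex set 'I_n: a set E of pairs (i,j) with i <= j,
   each representing the unordered edge {i,j}; (i,i) is a self-loop. *)
Definition edge_set_ok (n : nat) (E : {set 'I_n * 'I_n}) : Prop :=
  forall e, e \in E -> (e.1 <= e.2)%N.

Section RisingTide.
Variables (R : realType) (n : nat) (E : {set 'I_n * 'I_n}).
Variables (cV : 'I_n -> R) (cE : 'I_n * 'I_n -> R).

(* sum_j mu(i,j); a self-loop at i counts once *)
Definition vload (mu : 'I_n * 'I_n -> R) (i : 'I_n) : R :=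
  \sum_(e in E | (e.1 == i) || (e.2 == i)) mu e.

Definition feasible (mu : 'I_n * 'I_n -> R) : Prop :=
  (forall e, e \in E -> 0 <= mu e /\ mu e <= cE e) /\
  (forall i, vload mu i <= cV i).

Definition vsat (mu : 'I_n * 'I_n -> R) (i : 'I_n) : bool := vload mu i == cV i.
Definition esat (mu : 'I_n * 'I_n -> R) (e : 'I_n * 'I_n) : bool := mu e == cE e.

Definition raise (mu : 'I_n * 'I_n -> R) (E' : {set 'I_n * 'I_n}) (d : R) :=
  fun e => mu e + (if e \in E' then d else 0).

Definition is_max_delta (mu : 'I_n * 'I_n -> R) (E' : {set 'I_n * 'I_n}) (d : R) : Prop :=
  0 <= d /\ feasible (raise mu E' d) /\
  (forall d', 0 <= d' -> feasible (raise mu E' d') -> d' <= d).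

Inductive rt_step :
  (('I_n * 'I_n -> R) * {set 'I_n * 'I_n}) ->
  (('I_n * 'I_n -> R) * {set 'I_n * 'I_n}) -> Prop :=
| RtStep mu E' d :
    E' != set0 ->
    is_max_delta mu E' d ->
    rt_step (mu, E')
      (raise mu E' d,
       [set e in E' | ~~ [|| vsat (raise mu E' d) e.1,
                            vsat (raise mu E' d) e.2 |
                            esat (raise mu E' d) e]]).

Definition rt_init : ('I_n * 'I_n -> R) * {set 'I_n * 'I_n} :=
  (fun _ => 0, [set e in E | 0 < cE e]).

Definition rising_tide (mu : 'I_n * 'I_n -> R) : Prop :=
  clos_refl_trans _ rt_step rt_init (mu, set0).

End RisingTide.

(* Main.v *)
Require Import Defs.
From HB Require Import structures.
From mathcomp Require Import all_boot all_order all_algebra.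
From mathcomp Require Import reals lra.
From Stdlib Require Import Relations.
Import Order.TTheory GRing.Theory Num.Theory.
Set Implicit Arguments. Unset Strict Implicit. Unset Printing Implicit Defensive.
Local Open Scope ring_scope.

Section Inv.
Variables (R : realType) (n : nat) (E : {set 'I_n * 'I_n}).
Variables (cV : 'I_n -> R) (cE : 'I_n * 'I_n -> R).

Definition atv (i : 'I_n) (f : 'I_n * 'I_n) : bool := (f.1 == i) || (f.2 == i).

Definition frozen_ok (mu : 'I_n * 'I_n -> R) (E' : {set 'I_n * 'I_n}) e : Prop :=
  mu e = cE e \/ exists i, [/\ atv i e, vload E mu i = cV i &
     forall f, f \in E -> atv i f -> f \notin E' /\ mu f <= mu e].

Definition inv (s : ('I_n * 'I_n -> R) * {set 'I_n * 'I_n}) : Prop :=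
  feasible E cV cE s.1 /\ s.2 \subset E /\ exists L, 0 <= L /\
   (forall e, e \in s.2 -> s.1 e = L) /\
   (forall e, e \in E -> e \notin s.2 -> s.1 e <= L /\ frozen_ok s.1 s.2 e).

Lemma inv_step s s' : Defs.rt_step E cV cE s s' -> inv s -> inv s'.
Proof.
case=> mu E' d _ [d0 [hf _]] [_ [/= sub [L [L0 [hact hfr]]]]].
set mu' := raise mu E' d.
set E'' := [set e in E' | _].
have sub'' : E'' \subset E'.
  by apply/subsetP => e; rewrite inE => /andP[].
split; first exact: hf.
split; first exact: subset_trans sub'' sub.
exists (L + d); split; first lra.
split.
  move=> e /= he; have heE' := subsetP sub'' e he.
  by rewrite /mu' /raise heE' hact.
move=> e /= heE heN.
case: (boolP (e \in E')) => heE'.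
- have mue : mu' e = L + d by rewrite /mu' /raise heE' hact.
  split; first by rewrite mue.
  have : [|| vsat E cV mu' e.1, vsat E cV mu' e.2 | esat cE mu' e].
    move: heN; rewrite /E'' inE heE' /=. by case: [|| _, _ | _].
  have key : forall i, atv i e -> vsat E cV mu' i -> frozen_ok mu' E'' e.
    move=> i hi /eqP hv; right; exists i; split => // f hfE hfi.
    have fN : f \notin E''.
      rewrite inE negb_and negbK; apply/orP; right.
      by move: hfi; rewrite /atv /vsat => /orP[] /eqP ->; rewrite hv eqxx ?orbT.
    split => //.
    case: (boolP (f \in E')) => hfE'.
      by rewrite mue /mu' /raise hfE' hact.
    rewrite mue /mu' /raise (negbTE hfE') addr0.
    have [h _] := hfr f hfE hfE'. lra.
  case/orP => [hv|/orP[hv|/eqP hs]].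
  + by apply: (key e.1) => //; rewrite /atv eqxx.
  + by apply: (key e.2) => //; rewrite /atv eqxx orbT.
  + by left.
- have mue : mu' e = mu e by rewrite /mu' /raise (negbTE heE') addr0.
  have [hle hok] := hfr e heE heE'.
  split; first by rewrite mue; lra.
  case: hok => [hc|[i [hi hv hall]]]; first by left; rewrite mue.
  right; exists i; split => //.
    rewrite -hv /vload; apply: eq_bigr => f /andP[hfE hfi].
    have [hfE' _] := hall f hfE hfi.
    by rewrite /mu' /raise (negbTE hfE') addr0.
  move=> f hfE hfi; have [hfE' hmf] := hall f hfE hfi.
  split.
    by apply/negP => /(subsetP sub'') h; rewrite h in hfE'.
  by rewrite mue /mu' /raise (negbTE hfE') addr0.
Qed.

Lemma inv_rt s s' : clos_refl_trans _ (Defs.rt_step E cV cE) s s' -> inv s -> inv s'.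
Proof.
elim=> [x y /inv_step //| x // | x y z _ IH1 _ IH2 h]; exact: IH2 (IH1 h).
Qed.

Lemma inv_init : (forall i, 0 <= cV i) -> (forall e, e \in E -> 0 <= cE e) ->
  inv (rt_init E cE).
Proof.
move=> hV hE; split.
  split => [e he|i]; first by split => //; exact: hE.
  by rewrite /vload big1.
split; first by apply/subsetP => e; rewrite inE => /andP[].
exists 0; split => //; split => // e heE heN; split => //.
left; apply/eqP; rewrite eq_le hE // ?andbT.
by move: heN; rewrite inE heE /= -leNgt.
Qed.

Lemma rt_char mu : (forall i, 0 <= cV i) -> (forall e, e \in E -> 0 <= cE e) ->
  rising_tide E cV cE mu ->
  feasible E cV cE mu /\ forall e, e \in E -> frozen_ok mu set0 e.
Proof.
move=> hV hE hrt.
have [hf [_ [L [_ [_ hfr]]]]] := inv_rt hrt (inv_init hV hE).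
split => // e he; have [_ ] := hfr e he (negbT (in_set0 e)); done.
Qed.
End Inv.

Definition cnt (R : realType) n (E : {set 'I_n * 'I_n}) (mu nu : 'I_n * 'I_n -> R) e :=
  #|[set g in E | mu g + nu g < mu e + nu e]|.

Lemma cntC (R : realType) n (E : {set 'I_n * 'I_n}) (mu nu : 'I_n * 'I_n -> R) e :
  cnt E mu nu e = cnt E nu mu e.
Proof. by apply: eq_card => g; rewrite !inE (addrC (mu g)) (addrC (mu e)). Qed.

Lemma step_bound (R : realType) n (E : {set 'I_n * 'I_n}) cVG cEG cVH cEH
   (xi C : R) (mu nu : 'I_n * 'I_n -> R) k :
  0 <= xi -> 0 <= C ->
  (forall i, `|cVG i - cVH i| <= xi) -> (forall e, e \in E -> `|cEG e - cEH e| <= xi) ->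
  feasible E cVG cEG mu -> (forall e, e \in E -> frozen_ok E cVH cEH nu set0 e) ->
  (forall f, f \in E -> (cnt E mu nu f < k)%N -> `|mu f - nu f| <= C * xi) ->
  forall e, e \in E -> (cnt E mu nu e < k.+1)%N ->
    mu e - nu e <= ((n * n)%:R * C + 1) * xi.
Proof.
move=> xi0 C0 hV hEc [hfe hfv] hbot IH e he hk.
have NC0 : 0 <= (n * n)%:R * C * xi by rewrite mulr_ge0 // mulr_ge0.
rewrite mulrDl mul1r.
case: (hbot e he) => [hc | [i [hi hv hall]]].
  have := hEc e he; have [_ h2] := hfe e he.
  move=> /ler_normlP [h3 h4]. lra.
rewrite leNgt; apply/negP => hlt.
have hsum : \sum_(f in E | atv i f) (nu f - mu f) >= - xi.
  rewrite sumrB -/(vload E nu i) -/(vload E mu i) hv.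
  have := hfv i; have := hV i => /ler_normlP [h3 h4]. lra.
rewrite (bigD1 e) /= in hsum; last by rewrite he.
case: (boolP [exists f, [&& f \in E, atv i f, f != e & C * xi < nu f - mu f]]).
  case/existsP => f /and4P [hfE hfi hfe' hlt2].
  have [_ hnf] := hall f hfE hfi.
  have hM : mu f + nu f < mu e + nu e.
    have : 0 <= C * xi by rewrite mulr_ge0.
    lra.
  have hc : (cnt E mu nu f < k)%N.
    rewrite -ltnS; apply: leq_trans hk; apply: proper_card.
    apply/properP; split.
      apply/subsetP => g; rewrite !inE => /andP [-> /= hg]. 
      exact: lt_trans hg hM.
    by exists f; rewrite !inE ?hfE ?hM ?ltxx.
  have := IH f hfE hc; rewrite distrC => /ler_normlP [_ h]. lra.
rewrite negb_exists => /forallP hnone.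
have hb : \sum_(f in E | atv i f && (f != e)) (nu f - mu f) <= (n * n)%:R * C * xi.
  apply: (@le_trans _ _ (\sum_(f : 'I_n * 'I_n) C * xi)).
    rewrite [X in _ <= X](bigID (fun f => (f \in E) && (atv i f && (f != e)))) /=.
    rewrite -[X in X <= _]addr0; apply: lerD.
      apply: ler_sum => f /and3P [hfE hfi hfe'].
      by move: (hnone f); rewrite hfE hfi hfe' /= -leNgt.
    by rewrite sumr_const mulrn_wge0 // mulr_ge0.
  rewrite sumr_const (_ : #|xpredT| = #|{: 'I_n * 'I_n}|) // card_prod !card_ord.
  by rewrite -[C * xi *+ _]mulr_natl mulrA.
move: hsum hb.
rewrite (eq_bigl (fun f => (f \in E) && (atv i f && (f != e)))); last by move=> f; rewrite andbA.
lra.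
Qed.

Definition Cseq (R : realType) (n k : nat) : R := iter k (fun c => (n * n)%:R * c + 1) 0.

Lemma Cseq_ge0 (R : realType) n k : 0 <= Cseq R n k.
Proof.
elim: k => [|k IH] //=; rewrite /Cseq /=; apply: addr_ge0 => //.
by apply: mulr_ge0.
Qed.

Theorem lemma19 (R : realType) :
  exists F : nat -> R, (forall m, 0 <= F m) /\
  forall (n : nat) (E : {set 'I_n * 'I_n})
         (cVG cVH : 'I_n -> R) (cEG cEH : 'I_n * 'I_n -> R) (xi : R)
         (muG muH : 'I_n * 'I_n -> R),
    edge_set_ok E ->
    (forall i, 0 <= cVG i) -> (forall i, 0 <= cVH i) ->
    (forall e, e \in E -> 0 <= cEG e) -> (forall e, e \in E -> 0 <= cEH e) ->
    (forall i, `|cVG i - cVH i| <= xi) ->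
    (forall e, e \in E -> `|cEG e - cEH e| <= xi) ->
    rising_tide E cVG cEG muG ->
    rising_tide E cVH cEH muH ->
    forall e, e \in E -> `|muG e - muH e| <= F n * xi.
Proof.
exists (fun n => Cseq R n (n * n).+1); split; first by move=> m; exact: Cseq_ge0.
move=> n E cVG cVH cEG cEH xi muG muH _ hVG hVH hEG hEH hV hEc hG hH e he.
have xi0 : 0 <= xi by apply: le_trans (hV e.1).
have [fG bG] := rt_char hVG hEG hG.
have [fH bH] := rt_char hVH hEH hH.
have hV' : forall i, `|cVH i - cVG i| <= xi by move=> i; rewrite distrC.
have hEc' : forall e, e \in E -> `|cEH e - cEG e| <= xi by move=> f hf; rewrite distrC hEc.
have main : forall k f, f \in E -> (cnt E muG muH f < k)%N ->
    `|muG f - muH f| <= Cseq R n k * xi.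
  elim=> [//|k IH] f hf hk.
  have C0 := Cseq_ge0 R n k.
  have h1 := step_bound xi0 C0 hV hEc fG bH IH hf hk.
  have IH' : forall g, g \in E -> (cnt E muH muG g < k)%N ->
      `|muH g - muG g| <= Cseq R n k * xi.
    by move=> g hg; rewrite cntC distrC; exact: IH.
  have hk' : (cnt E muH muG f < k.+1)%N by rewrite cntC.
  have h2 := step_bound xi0 C0 hV' hEc' fH bG IH' hf hk'.
  rewrite ler_norml; apply/andP; split; rewrite /Cseq /= -/(Cseq R n k); lra.
apply: main => //; rewrite ltnS.
apply: leq_trans (max_card _) _.
by rewrite card_prod !card_ord.
Qed.
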